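(* Let $Q$ be a finite quiver, $R\subseteq\mathbb{C}Q_{\ge1}$ a finite-dimensional $\mathbb{C}Q_0$-sub-bimodule of bounded type, $(B,\mathfrak{m})$ a deformation base, $\psi:R\to\mathfrak{m}\mathbb{C}Q$ a $\mathbb{C}Q_0$-bimodule map and $P=(\mathrm{Id}+\psi)(R)$. If $I(P)$ is quasi-flat, then $I(P)_{\mathbb{C}Q}$ is quasi-flat, i.e. $I(P)_{\mathbb{C}Q}\cap\mathfrak{m}\mathbb{C}Q\subseteq\mathfrak{m}I(P)_{\mathbb{C}Q}$.
   Context: Deformation base: complete local Noetherian unital $\mathbb{C}$-algebra $B$ with maximal ideal $\mathfrak{m}$, $B/\mathfrak{m}=\mathbb{C}$; $B\widehat{\otimes}X=\varprojlim(B/\mathfrak{m}^k\otimes X)$; for a subspace $Y\subseteq B\widehat{\otimes}X$, $\mathfrak{m}Y=\{\sum_im_iy_i:y_i\in Y,m_i\in\mathfrak{m}^{k_i},k_i\ge1,k_i\to\infty\}$, and $\mathfrak{m}X$ is the image of $\mathfrak{m}\widehat{\otimes}X$. $\widehat{\mathbb{C}Q}$ is the completed path algebra. $(P)=\{\sum_{i\ge0}p_i(r_i+\psi(r_i))q_i: r_i\in R,p_i,q_i\text{ paths},|p_i|+|q_i|\to\infty\}\subseteq B\widehat{\otimes}\widehat{\mathbb{C}Q}$; $I(P)=\{\sum_jb_jy_j:y_j\in(P),b_j\in\mathfrak{m}^{k_j},k_j\to\infty\}$; $I(P)$ is quasi-flat if $I(P)\cap\mathfrak{m}\widehat{\mathbb{C}Q}\subseteq\mathfrak{m}I(P)$.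 $I(P)_{\mathbb{C}Q}=\{\sum_ib_ip_i(r_i+\psi(r_i))q_i:b_i\in\mathfrak{m}^{k_i},k_i\to\infty,r_i\in R,p_i,q_i\text{ paths}\}\subseteq B\widehat{\otimes}\mathbb{C}Q$. Bounded type: $R$ has a basis $F$ (each element in some $e_v\mathbb{C}Qe_w$) such that, with $\sim$ the equivalence relation on paths generated by $pc_iq\sim pc_jq$ whenever $c_i,c_j$ are paths with nonzero coefficient in the same $c\in F$, $h(N)=\sup\{|q|:\exists p,|p|\le N,p\sim q\}<\infty$ for all $N$. *)

(* Defs.v *)
From HB Require Import structures.
From mathcomp Require Import all_boot all_order all_algebra.
From mathcomp Require Import complex Rstruct.
From Stdlib Require Import Relation_Operators.

Set Implicit Arguments. Unset Strict Implicit. Unset Printing Implicit Defensive.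
Import Order.TTheory GRing.Theory Num.Theory.
Local Open Scope ring_scope.

Notation CC := (complex Rdefinitions.R).

Record quiver := Quiver {
  Q0 : finType;
  Q1 : finType;
  qsrc : Q1 -> Q0;
  qtgt : Q1 -> Q0 }.

Section Paths.
Variable Q : quiver.

(* chain u s v : the arrows s compose into a path from u to v
   (left-to-right convention: the path a1 a2 ... an first follows a1). *)
Fixpoint chain (u : Q0 Q) (s : seq (Q1 Q)) (v : Q0 Q) : bool :=
  match s with
  | [::] => u == v
  | a :: s' => (qsrc a == u) && chain (qtgt a) s' v
  end.

Definition rawpath := (Q0 Q * Q0 Q * seq (Q1 Q))%type.
(* A path: (start, end, arrows); trivial paths e_v are (v, v, [::]). *)
Definition qpath := {x : rawpath | chain x.1.1 x.2 x.1.2}.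

Definition pstart (p : qpath) : Q0 Q := (val p).1.1.
Definition pend (p : qpath) : Q0 Q := (val p).1.2.
Definition parrows (p : qpath) : seq (Q1 Q) := (val p).2.
Definition plen (p : qpath) : nat := size (parrows p).

Definition is_concat (p c q w : qpath) : bool :=
  [&& parrows w == parrows p ++ parrows c ++ parrows q,
      pstart w == pstart p, pend w == pend q,
      pend p == pstart c & pend c == pstart q].

(* the (unique, if any) c such that w = p c q *)
Definition middle (p q w : qpath) : option qpath :=
  match @insub rawpath _ _
     ((pend p, pstart q,
       take (plen w - plen p - plen q) (drop (plen p) (parrows w))) : rawpath)
  with
  | Some c => if is_concat p c q w then Some c else None
  | None => None
  end.

Section Coeffs.
Variable K : nmodType.
(* Elements of K ^ (paths) : (possibly infinite) K-combinations of paths. *)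
Definition sandwich (p q : qpath) (x : qpath -> K) : qpath -> K :=
  fun w => if middle p q w is Some c then x c else 0.
(* x |-> e_v x e_w *)
Definition eproj (v w : Q0 Q) (x : qpath -> K) : qpath -> K :=
  fun u => if (pstart u == v) && (pend u == w) then x u else 0.
End Coeffs.

(* Elements of the path algebra CQ: finitely supported functions. *)
Definition in_CQ (r : qpath -> CC) : Prop :=
  exists s : seq qpath, forall w, r w != 0 -> w \in s.
Definition in_CQge1 (r : qpath -> CC) : Prop :=
  in_CQ r /\ forall w, plen w = 0%N -> r w = 0.
End Paths.

Section Base.
Variables (B : comAlgType CC) (m : B -> Prop).

Fixpoint mpow (k : nat) : B -> Prop :=
  match k with
  | 0 => fun _ => True
  | k'.+1 => fun x => exists s : seq (B * B),
       (forall ab, ab \in s -> m ab.1 /\ mpow k' ab.2) /\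
       x = \sum_(ab <- s) ab.1 * ab.2
  end.

Definition converges (u : nat -> B) (l : B) : Prop :=
  forall k, exists N, forall n, (N <= n)%N -> mpow k (l - u n).
Definition cauchy (u : nat -> B) : Prop :=
  forall k, exists N, forall n n', (N <= n)%N -> (N <= n')%N -> mpow k (u n - u n').

Definition is_ideal (I : B -> Prop) : Prop :=
  [/\ I 0, forall x y, I x -> I y -> I (x + y) & forall a x, I x -> I (a * x)].
Definition fin_gen (I : B -> Prop) : Prop :=
  exists s : seq B, forall x, I x <-> exists a : nat -> B,
      x = \sum_(i < size s) a i * s`_i.

(* (B, m) is a complete local Noetherian C-algebra with maximal ideal m
   and B/m = C. *)
Definition deformation_base : Prop :=
  is_ideal m /\ ~ m 1 /\
  (forall x, ~ m x -> exists y, x * y = 1) /\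
  (* B/m = C *)
  (forall b, exists c : CC, m (b - c%:A)) /\
  (forall I, is_ideal I -> fin_gen I) /\
  (forall b, (forall k, mpow k b) -> b = 0) /\
  (forall u, cauchy u -> exists l, converges u l).

Definition tends_infty (k : nat -> nat) : Prop :=
  forall N, exists M, forall i, (M <= i)%N -> (N <= k i)%N.

Section Spaces.
Variable Q : quiver.
(* B \hat\otimes \hat{CQ} is modelled by qpath -> B (all functions);
   B \hat\otimes CQ is the subspace of functions x such that, for every k,
   x w lies in m^k for all but finitely many paths w. *)
Definition in_BCQ (x : qpath Q -> B) : Prop :=
  forall k, exists s : seq (qpath Q), forall w, ~ mpow k (x w) -> w \in s.
Definition in_mCQhat (x : qpath Q -> B) : Prop := forall w, m (x w).
Definition in_mCQ (x : qpath Q -> B) : Prop := in_BCQ x /\ in_mCQhat x.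

Definition sum_to (t : nat -> qpath Q -> B) (z : qpath Q -> B) : Prop :=
  forall w, converges (fun n => \sum_(i < n) t i w) (z w).

Definition mY (Y : (qpath Q -> B) -> Prop) (z : qpath Q -> B) : Prop :=
  exists (b : nat -> B) (k : nat -> nat) (y : nat -> qpath Q -> B),
    (forall i, (1 <= k i)%N /\ mpow (k i) (b i) /\ Y (y i)) /\
    tends_infty k /\ sum_to (fun i w => b i * y i w) z.

Variables (R : (qpath Q -> CC) -> Prop) (psi : (qpath Q -> CC) -> (qpath Q -> B)).

Definition idpsi (r : qpath Q -> CC) : qpath Q -> B :=
  fun w => (r w)%:A + psi r w.

(* (P): sums \sum_i p_i (r_i + psi r_i) q_i over a finite or infinite family
   (None = no term) with |p_i| + |q_i| -> oo. *)
Definition in_Pgen (z : qpath Q -> B) : Prop :=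
  exists t : nat -> option (qpath Q * (qpath Q -> CC) * qpath Q),
    (forall i, if t i is Some (p, r, q) then R r else True) /\
    (forall N, exists M, forall i, (M <= i)%N ->
        match t i with Some (p, r, q) => is_true (N <= plen p + plen q)%N | None => True end) /\
    sum_to (fun i => if t i is Some (p, r, q) then sandwich p q (idpsi r)
                     else fun _ => 0) z.

Definition in_IP (z : qpath Q -> B) : Prop :=
  exists (b : nat -> B) (k : nat -> nat) (y : nat -> qpath Q -> B),
    (forall j, mpow (k j) (b j) /\ in_Pgen (y j)) /\
    tends_infty k /\ sum_to (fun j w => b j * y j w) z.

Definition in_IP_CQ (z : qpath Q -> B) : Prop :=
  exists (b : nat -> B) (k : nat -> nat)
         (t : nat -> option (qpath Q * (qpath Q -> CC) * qpath Q)),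
    (forall i, mpow (k i) (b i) /\
               if t i is Some (p, r, q) then R r else True) /\
    tends_infty k /\
    sum_to (fun i w => if t i is Some (p, r, q)
                       then b i * sandwich p q (idpsi r) w else 0) z.

Definition bimodule_map_to_mCQ : Prop :=
  (forall r s, R r -> R s ->
     psi (fun w => r w + s w) = (fun w => psi r w + psi s w)) /\
  (forall (c : CC) r, R r -> psi (fun w => c * r w) = (fun w => c *: psi r w)) /\
  (forall v v' r, R r -> psi (eproj v v' r) = eproj v v' (psi r)) /\
  (forall r, R r -> in_mCQ (psi r)).
End Spaces.
End Base.

Section RConds.
Variables (Q : quiver) (R : (qpath Q -> CC) -> Prop).

Definition fun0 : qpath Q -> CC := fun _ => 0.

Definition sub_bimodule_CQge1 : Prop :=
  (forall r, R r -> in_CQge1 r) /\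
  R fun0 /\
  (forall r s, R r -> R s -> R (fun w => r w + s w)) /\
  (forall (c : CC) r, R r -> R (fun w => c * r w)) /\
  (forall v v' r, R r -> R (eproj v v' r)).

Definition lincomb (F : seq (qpath Q -> CC)) (a : nat -> CC) : qpath Q -> CC :=
  fun w => \sum_(i < size F) a i * nth fun0 F i w.

Definition is_basis (F : seq (qpath Q -> CC)) : Prop :=
  (forall i, (i < size F)%N -> R (nth fun0 F i)) /\
  (forall a, lincomb F a = fun0 -> forall i, (i < size F)%N -> a i = 0) /\
  (forall r, R r -> exists a, r = lincomb F a).

Definition finite_dimensional : Prop := exists F, is_basis F.

Definition sim_step (F : seq (qpath Q -> CC)) (w1 w2 : qpath Q) : Prop :=
  exists i (p q c1 c2 : qpath Q), (i < size F)%N /\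
    nth fun0 F i c1 != 0 /\ nth fun0 F i c2 != 0 /\
    is_concat p c1 q w1 /\ is_concat p c2 q w2.

Definition sim (F : seq (qpath Q -> CC)) : qpath Q -> qpath Q -> Prop :=
  clos_refl_sym_trans (qpath Q) (sim_step F).

Definition bounded_type : Prop :=
  exists F : seq (qpath Q -> CC),
    is_basis F /\
    (forall i, (i < size F)%N -> exists v v',
        eproj v v' (nth fun0 F i) = nth fun0 F i) /\
    (forall N, exists H, forall p q, (plen p <= N)%N -> sim F p q ->
        (plen q <= H)%N).
End RConds.

(* Main.v *)
Require Import Defs.
From HB Require Import structures.
From mathcomp Require Import all_boot all_order all_algebra.
From mathcomp Require Import complex Rstruct.
From mathcomp Require Import ring.
From Stdlib Require Import Relation_Operators.
From Stdlib Require Import ClassicalEpsilon FunctionalExtensionality Classical.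
Set Implicit Arguments. Unset Strict Implicit. Unset Printing Implicit Defensive.
Import Order.TTheory GRing.Theory Num.Theory.
Local Open Scope ring_scope.

Section Base1.
Variables (B : comAlgType CC) (m : B -> Prop).
Hypothesis Hdb : deformation_base m.

Lemma m_ideal : is_ideal m.
Proof. by case: Hdb. Qed.
Lemma m0 : m 0. Proof. by case: m_ideal. Qed.
Lemma mD x y : m x -> m y -> m (x + y). Proof. by case: m_ideal => _ H _; apply: H. Qed.
Lemma mMl a x : m x -> m (a * x). Proof. by case: m_ideal => _ _ H; apply: H. Qed.
Lemma mMr a x : m x -> m (x * a). Proof. by rewrite mulrC; apply: mMl. Qed.
Lemma mN x : m x -> m (- x).
Proof. by move=> h; rewrite -mulN1r; apply: mMl. Qed.
Lemma mB x y : m x -> m y -> m (x - y).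
Proof. by move=> hx hy; apply: mD => //; apply: mN. Qed.
Lemma not_m1 : ~ m 1. Proof. by case: Hdb => _ []. Qed.

Lemma mpow0 k : mpow m k 0.
Proof. case: k => [//|k]; exists [::]; split => //; by rewrite big_nil. Qed.

Lemma mpowD k x y : mpow m k x -> mpow m k y -> mpow m k (x + y).
Proof.
case: k => [//|k] [s [Hs ->]] [s' [Hs' ->]].
exists (s ++ s'); split; last by rewrite big_cat.
by move=> ab; rewrite mem_cat => /orP [] h; [apply: Hs|apply: Hs'].
Qed.

Lemma mpowMl k a x : mpow m k x -> mpow m k (a * x).
Proof.
case: k => [//|k] [s [Hs ->]].
exists [seq (a * ab.1, ab.2) | ab <- s]; split.
  move=> ab /mapP [ab' h ->] /=; case: (Hs _ h) => h1 h2; split => //.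
  by apply: mMl.
by rewrite big_map mulr_sumr; apply: eq_bigr => i _; rewrite mulrA.
Qed.

Lemma mpowMr k a x : mpow m k x -> mpow m k (x * a).
Proof. by rewrite mulrC; apply: mpowMl. Qed.

Lemma mpowN k x : mpow m k x -> mpow m k (- x).
Proof. by move=> h; rewrite -mulN1r; apply: mpowMl. Qed.

Lemma mpowB k x y : mpow m k x -> mpow m k y -> mpow m k (x - y).
Proof. by move=> hx hy; apply: mpowD => //; apply: mpowN. Qed.

Lemma mpowZ k (c : CC) x : mpow m k x -> mpow m k (c *: x).
Proof. by move=> h; rewrite -mulr_algl; apply: mpowMl. Qed.

Lemma mpow_sum k (I : Type) (r : seq I) (P : pred I) (F : I -> B) :
  (forall i, P i -> mpow m k (F i)) -> mpow m k (\sum_(i <- r | P i) F i).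
Proof.
move=> h; elim: r => [|a r IH]; first by rewrite big_nil; apply: mpow0.
rewrite big_cons; case: ifP => Pa //; by apply: mpowD => //; apply: h.
Qed.

Lemma mpowS k x : mpow m k.+1 x -> mpow m k x.
Proof.
elim: k x => [//|k IH] x [s [Hs ->]].
exists s; split => // ab h; case: (Hs _ h) => h1 h2; split => //; exact: IH.
Qed.

Lemma mpow_le k k' x : (k <= k')%N -> mpow m k' x -> mpow m k x.
Proof.
move=> /subnK <-; elim: (k' - k)%N => [//|n IH] h.
by apply: IH; apply: mpowS; rewrite -addSn.
Qed.

Lemma mpow_mS k a x : m a -> mpow m k x -> mpow m k.+1 (a * x).
Proof. move=> ha hx; exists [:: (a, x)]; split; last by rewrite big_seq1.
by move=> ab; rewrite inE => /eqP -> /=. Qed.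

Lemma mpowM k k' x y : mpow m k x -> mpow m k' y -> mpow m (k + k') (x * y).
Proof.
elim: k x => [|k IH] x; first by rewrite add0n => _; apply: mpowMl.
move=> [s [Hs ->]] hy; rewrite addSn.
exists [seq (ab.1, ab.2 * y) | ab <- s]; split.
  move=> ab /mapP [ab' h ->] /=; case: (Hs _ h) => h1 h2; split => //.
  exact: IH.
by rewrite big_map mulr_suml; apply: eq_bigr => i _; rewrite mulrA.
Qed.

Lemma mpow1 x : mpow m 1 x <-> m x.
Proof.
split; last by move=> h; rewrite -[x]mulr1; apply: mpow_mS.
move=> [s [Hs ->]]; elim: s Hs => [|a s IH] Hs; first by rewrite big_nil; apply: m0.
rewrite big_cons; apply: mD.
  by case: (Hs a (mem_head _ _)) => h _; apply: mMr.
by apply: IH => ab h; apply: Hs; rewrite inE h orbT.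
Qed.

Lemma mpow_m k x : (1 <= k)%N -> mpow m k x -> m x.
Proof. by move=> hk h; apply/mpow1; apply: mpow_le h. Qed.

Lemma mpow_is_ideal k : is_ideal (mpow m k).
Proof. split; [exact: mpow0 | exact: mpowD | exact: mpowMl]. Qed.

Lemma res_ex b : exists c : CC, m (b - c%:A).
Proof. by case: Hdb => _ [_ [_ [H _]]]. Qed.

Definition res (b : B) : CC := epsilon (inhabits 0) (fun c => m (b - c%:A)).

Lemma resP b : m (b - (res b)%:A).
Proof. exact: (epsilon_spec (inhabits 0) (fun c => m (b - c%:A)) (res_ex b)). Qed.

Lemma scal_m (c : CC) : m (c%:A) -> c = 0.
Proof.
move=> h; apply/eqP; apply/negPn/negP => hc; apply: not_m1.
have -> : (1 : B) = (c^-1)%:A * c%:A.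
  by rewrite mulr_algl scalerA mulVf // scale1r.
exact: mMl.
Qed.

Lemma res_uniq b c : m (b - c%:A) -> res b = c.
Proof.
move=> h; apply/eqP; rewrite -subr_eq0; apply/eqP; apply: scal_m.
have := mB h (resP b).
have -> : (res b - c)%:A = (b - c%:A) - (b - (res b)%:A) :> B.
  by rewrite scalerBl; ring.
by [].
Qed.

Lemma res_m x : m x -> res x = 0.
Proof. by move=> h; apply: res_uniq; rewrite scale0r subr0. Qed.

Lemma m_res x : res x = 0 -> m x.
Proof. by move=> h; have := resP x; rewrite h scale0r subr0. Qed.

Lemma resD x y : res (x + y) = res x + res y.
Proof.
apply: res_uniq; have := mD (resP x) (resP y).
by rewrite scalerDl opprD addrACA.
Qed.

Lemma resN x : res (- x) = - res x.
Proof. apply: res_uniq; have := mN (resP x). by rewrite opprB scaleNr opprK addrC. Qed.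

Lemma resB x y : res (x - y) = res x - res y.
Proof. by rewrite resD resN. Qed.

Lemma res_alg c : res (c%:A) = c.
Proof. by apply: res_uniq; rewrite subrr; apply: m0. Qed.

Lemma res_sum (I : Type) (r : seq I) (P : pred I) (F : I -> B) :
  res (\sum_(i <- r | P i) F i) = \sum_(i <- r | P i) res (F i).
Proof.
elim: r => [|a r IH]; first by rewrite !big_nil res_m //; apply: m0.
by rewrite !big_cons; case: ifP => _ //; rewrite resD IH.
Qed.

Lemma separated b : (forall k, mpow m k b) -> b = 0.
Proof. by case: Hdb => _ [_ [_ [_ [_ [H _]]]]]; apply: H. Qed.

Lemma conv_uniq u l l' : converges m u l -> converges m u l' -> l = l'.
Proof.
move=> h h'; apply/eqP; rewrite -subr_eq0; apply/eqP; apply: separated => k.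
case: (h k) => N hN; case: (h' k) => N' hN'.
have := mpowB (hN (maxn N N') (leq_maxl _ _)) (hN' (maxn N N') (leq_maxr _ _)).
by rewrite opprB addrA subrK.
Qed.

Lemma conv_ev u l N : (forall n, (N <= n)%N -> u n = l) -> converges m u l.
Proof. by move=> h k; exists N => n hn; rewrite h // subrr; apply: mpow0. Qed.

Lemma convD u v l l' : converges m u l -> converges m v l' ->
  converges m (fun n => u n + v n) (l + l').
Proof.
move=> h h' k; case: (h k) => N hN; case: (h' k) => N' hN'.
exists (maxn N N') => n; rewrite geq_max => /andP [h1 h2].
by rewrite opprD addrACA; apply: mpowD; [apply: hN | apply: hN'].
Qed.

Lemma convN u l : converges m u l -> converges m (fun n => - u n) (- l).
Proof. move=> h k; case: (h k) => N hN; exists N => n hn.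
have -> : - l - - u n = - (l - u n) by ring.
by apply: mpowN; apply: hN. Qed.

Lemma convB u v l l' : converges m u l -> converges m v l' ->
  converges m (fun n => u n - v n) (l - l').
Proof. by move=> h h'; apply: convD => //; apply: convN. Qed.

Lemma convMl a u l : converges m u l -> converges m (fun n => a * u n) (a * l).
Proof. move=> h k; case: (h k) => N hN; exists N => n hn.
by rewrite -mulrBr; apply: mpowMl; apply: hN. Qed.

Lemma conv_ext u v l : (forall n, u n = v n) -> converges m u l -> converges m v l.
Proof. by move=> e h k; case: (h k) => N hN; exists N => n hn; rewrite -e; apply: hN. Qed.

Lemma conv_shift u l N : converges m u l -> converges m (fun n => u (n + N)%N) l.
Proof. move=> h k; case: (h k) => M hM; exists M => n hn; apply: hM.
by apply: leq_trans hn (leq_addr _ _). Qed.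

Lemma conv_closed k u l : converges m u l -> (forall n, mpow m k (u n)) -> mpow m k l.
Proof.
move=> h hu; case: (h k) => N hN.
by rewrite -(subrK (u N) l); apply: mpowD; [apply: hN | apply: hu].
Qed.

Lemma conv_closed_ev k u l : converges m u l ->
  (exists N, forall n, (N <= n)%N -> mpow m k (u n)) -> mpow m k l.
Proof.
move=> h [N hu]; apply: (@conv_closed k (fun n => u (n + N)%N)); first exact: conv_shift.
by move=> n; apply: hu; rewrite leq_addl.
Qed.

Lemma conv_res u l : converges m u l -> exists N, forall n, (N <= n)%N -> res (u n) = res l.
Proof.
move=> h; case: (h 1%N) => N hN; exists N => n hn.
have := res_m (proj1 (mpow1 _) (hN n hn)); rewrite resB => /eqP.
by rewrite subr_eq0 => /eqP.
Qed.

End Base1.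

Section Paths2.
Variable Q : quiver.
Implicit Types p q w c : qpath Q.

Lemma middle_concat p q w c : middle p q w = Some c -> is_concat p c q w.
Proof. by rewrite /middle; case: insub => [c0|] //; case: ifP => // h [<-]. Qed.

Lemma concat_len p c q w : is_concat p c q w -> plen w = (plen p + plen c + plen q)%N.
Proof. by case/and5P => /eqP h _ _ _ _; rewrite /plen h !size_cat addnA. Qed.

Lemma concat_inj p c q w w' : is_concat p c q w -> is_concat p c q w' -> w = w'.
Proof.
case/and5P => /eqP h1 /eqP h2 /eqP h3 _ _; case/and5P => /eqP h1' /eqP h2' /eqP h3' _ _.
apply: val_inj; move: h1 h2 h3 h1' h2' h3'; rewrite /parrows /pstart /pend.
case: w => [[[a b] s] hw]; case: w' => [[[a' b'] s'] hw'] /= -> -> -> -> -> ->.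
by [].
Qed.

Lemma middle_inj p q w w' c : middle p q w = Some c -> middle p q w' = Some c -> w = w'.
Proof. by move=> /middle_concat h /middle_concat h'; apply: concat_inj h h'. Qed.

Lemma middle_len p q w c : middle p q w = Some c -> (plen p + plen q <= plen w)%N.
Proof.
move=> /middle_concat /concat_len ->; rewrite -addnA leq_add2l; exact: leq_addl.
Qed.

Lemma sandwich_nz (K : nmodType) p q (x : qpath Q -> K) w :
  sandwich p q x w != 0 -> exists c, middle p q w = Some c /\ x c != 0.
Proof. by rewrite /sandwich; case: (middle p q w) => [c|]; [exists c | rewrite eqxx]. Qed.

Lemma sandwich_len (K : nmodType) p q (x : qpath Q -> K) w :
  sandwich p q x w != 0 -> (plen p + plen q <= plen w)%N.
Proof. by case/sandwich_nz => c [h _]; apply: middle_len h. Qed.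

Lemma sandwichD (K : nmodType) p q (x y : qpath Q -> K) w :
  sandwich p q (fun u => x u + y u) w = sandwich p q x w + sandwich p q y w.
Proof. by rewrite /sandwich; case: (middle p q w) => // ; rewrite addr0. Qed.

Lemma sandwich0 (K : nmodType) p q w : sandwich p q (fun _ : qpath Q => 0 : K) w = 0.
Proof. by rewrite /sandwich; case: (middle p q w). Qed.

Lemma sandwichMl (K : pzRingType) p q (a : K) (x : qpath Q -> K) w :
  sandwich p q (fun u => a * x u) w = a * sandwich p q x w.
Proof. by rewrite /sandwich; case: (middle p q w) => //; rewrite mulr0. Qed.

Lemma sandwich_map (K K' : nmodType) (f : K -> K') p q (x : qpath Q -> K) w :
  f 0 = 0 -> sandwich p q (fun u => f (x u)) w = f (sandwich p q x w).
Proof. by rewrite /sandwich; case: (middle p q w). Qed.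

End Paths2.

Section Series.
Variables (B : comAlgType CC) (m : B -> Prop).
Hypothesis Hdb : deformation_base m.
Variable Q : quiver.
Implicit Types (t : nat -> qpath Q -> B) (z x y : qpath Q -> B).

Lemma sum_to_uniq t z z' : sum_to m t z -> sum_to m t z' -> z = z'.
Proof. move=> h h'; apply: functional_extensionality => w; exact: conv_uniq (h w) (h' w). Qed.

Lemma sum_to_ext t t' z : (forall i w, t i w = t' i w) -> sum_to m t z -> sum_to m t' z.
Proof.
move=> e h w; apply: (conv_ext _ (h w)) => n; by apply: eq_bigr => i _; rewrite e.
Qed.

Lemma sum_to_extz t z z' : (forall w, z w = z' w) -> sum_to m t z -> sum_to m t z'.
Proof. by move=> e h w; rewrite -e; apply: h. Qed.

Lemma sum_toD t t' z z' : sum_to m t z -> sum_to m t' z' ->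
  sum_to m (fun i w => t i w + t' i w) (fun w => z w + z' w).
Proof.
move=> h h' w; apply: (conv_ext _ (convD (h w) (h' w))) => n.
by rewrite big_split.
Qed.

Lemma sum_toN t z : sum_to m t z -> sum_to m (fun i w => - t i w) (fun w => - z w).
Proof.
move=> h w; apply: (conv_ext _ (convN Hdb (h w))) => n; by rewrite sumrN.
Qed.

Lemma sum_toB t t' z z' : sum_to m t z -> sum_to m t' z' ->
  sum_to m (fun i w => t i w - t' i w) (fun w => z w - z' w).
Proof. by move=> h h'; apply: sum_toD h (sum_toN h'). Qed.

Lemma sum_toMl (a : qpath Q -> B) t z : sum_to m t z ->
  sum_to m (fun i w => a w * t i w) (fun w => a w * z w).
Proof.
move=> h w; apply: (conv_ext _ (convMl Hdb (a w) (h w))) => n; by rewrite mulr_sumr.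
Qed.

Lemma sum_to_fin t N : (forall i w, (N <= i)%N -> t i w = 0) ->
  sum_to m t (fun w => \sum_(i < N) t i w).
Proof.
move=> h w; apply: (@conv_ev _ m _ _ N) => n hn.
rewrite -(subnKC hn) big_split_ord /= [X in _ + X]big1 ?addr0 // => i _.
by apply: h; rewrite leq_addr.
Qed.

Lemma sum_to_zero : sum_to m (fun _ (_ : qpath Q) => 0) (fun _ => 0).
Proof.
apply: sum_to_extz (sum_to_fin (N := 0) _) => // w; by rewrite big_ord0.
Qed.

Lemma sum_to_shift t z N : sum_to m t z ->
  sum_to m (fun i => t (i + N)%N) (fun w => z w - \sum_(i < N) t i w).
Proof.
move=> h w.
have h0 : converges m (fun _ : nat => \sum_(i < N) t i w) (\sum_(i < N) t i w).
  by apply: (@conv_ev _ m _ _ 0).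
have h1 := convB Hdb (h w) h0.
have h2 := conv_shift N h1.
apply: (conv_ext _ h2) => n /=.
rewrite (addnC n N) big_split_ord /= addrAC subrr add0r; apply: eq_bigr => i _; by rewrite addnC.
Qed.

Lemma sum_to_unshift t z N : sum_to m (fun i => t (i + N)%N) z ->
  sum_to m t (fun w => z w + \sum_(i < N) t i w).
Proof.
move=> h w k; case: (h w k) => M hM; exists (M + N)%N => n hn.
have hn' : (N <= n)%N by apply: leq_trans (leq_addl M N) hn.
rewrite -(subnKC hn') big_split_ord /=.
have -> : z w + \sum_(i < N) t i w - (\sum_(i < N) t i w + \sum_(i < n - N) t (N + i)%N w)
  = z w - \sum_(i < n - N) t (i + N)%N w.
  have -> : \sum_(i < n - N) t (N + i)%N w = \sum_(i < n - N) t (i + N)%N w.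
    by apply: eq_bigr => i _; rewrite addnC.
  ring.
by apply: hM; rewrite leq_subRL // addnC.
Qed.

Lemma interleave_sum (f g : nat -> B) n :
  \sum_(i < n) (if odd i then g i./2 else f i./2) =
  \sum_(i < uphalf n) f i + \sum_(i < n./2) g i.
Proof.
elim: n => [|n IH]; first by rewrite !big_ord0 addr0.
rewrite big_ord_recr /= IH uphalf_half /=.
case: (odd n).
  have -> : (true + n./2 = n./2.+1)%N by [].
  by rewrite [\sum_(i < n./2.+1) g i]big_ord_recr /=; ring.
have -> : (false + n./2 = n./2)%N by [].
by rewrite [\sum_(i < n./2.+1) f i]big_ord_recr /=; ring.
Qed.

Lemma sum_to_interleave t t' z z' : sum_to m t z -> sum_to m t' z' ->
  sum_to m (fun i w => if odd i then t' i./2 w else t i./2 w) (fun w => z w + z' w).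
Proof.
move=> h h' w k; case: (h w k) => N hN; case: (h' w k) => N' hN'.
exists ((maxn N N').*2) => n hn.
rewrite (interleave_sum (fun i => t i w) (fun i => t' i w)).
rewrite opprD addrACA; apply: mpowD.
  apply: hN; apply: leq_trans (leq_maxl N N') _.
  by rewrite geq_uphalf_double; apply: leq_trans hn _.
apply: hN'; apply: leq_trans (leq_maxr N N') _.
by rewrite geq_half_double.
Qed.

Lemma sum_to_mpow k t z : sum_to m t z -> (forall i w, mpow m k (t i w)) ->
  forall w, mpow m k (z w).
Proof.
move=> h ht w; apply: conv_closed (h w) _ => // n.
by apply: mpow_sum => i _; apply: ht.
Qed.

Lemma BCQ0 : in_BCQ m (fun _ : qpath Q => 0 : B).
Proof. by move=> k; exists [::] => w h; exfalso; apply: h; apply: mpow0. Qed.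

Lemma BCQD x y : in_BCQ m x -> in_BCQ m y -> in_BCQ m (fun w : qpath Q => x w + y w).
Proof.
move=> hx hy k; case: (hx k) => s hs; case: (hy k) => s' hs'.
exists (s ++ s') => w h; rewrite mem_cat; apply/orP.
case: (classic (mpow m k (x w))) => h1; last by left; apply: hs.
case: (classic (mpow m k (y w))) => h2; last by right; apply: hs'.
by exfalso; apply: h; apply: mpowD.
Qed.

Lemma BCQMl (a : B) x : in_BCQ m x -> in_BCQ m (fun w : qpath Q => a * x w).
Proof.
move=> hx k; case: (hx k) => s hs; exists s => w h; apply: hs => h'; apply: h.
exact: mpowMl.
Qed.

Lemma BCQN x : in_BCQ m x -> in_BCQ m (fun w : qpath Q => - x w).
Proof. move=> h; have := BCQMl (-1) h.
by congr in_BCQ; apply: functional_extensionality => w; rewrite mulN1r. Qed.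

Lemma BCQ_ext x y : (forall w, x w = y w) -> in_BCQ m x -> @in_BCQ _ m Q y.
Proof. by move=> e; have -> : x = y by apply: functional_extensionality. Qed.

Lemma BCQ_sum (I : Type) (r : seq I) (F : I -> qpath Q -> B) :
  (forall i, in_BCQ m (F i)) -> in_BCQ m (fun w => \sum_(i <- r) F i w).
Proof.
move=> h; elim: r => [|a r IH].
  by apply: BCQ_ext BCQ0 => w; rewrite big_nil.
by apply: BCQ_ext (BCQD (h a) IH) => w; rewrite big_cons.
Qed.

Lemma BCQ_sandwich p q x : in_BCQ m x -> in_BCQ m (sandwich p q x).
Proof.
move=> hx k; case: (hx k) => s hs.
pose f c := epsilon (inhabits None) (fun o => exists w, o = Some w /\ middle p q w = Some c).
exists (pmap f s) => w h.
move: h; rewrite /sandwich; case e: (middle p q w) => [c|]; last first.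
  by move=> h; exfalso; apply: h; apply: mpow0.
move=> h; have cs := hs _ h.
have : exists o, exists w, o = Some w /\ middle p q w = Some c by exists (Some w), w.
move/(epsilon_spec (inhabits None)) => [w' [e' hw']].
rewrite mem_pmap; apply/mapP; exists c => //; rewrite -/(f c) in e'.
by rewrite e' (middle_inj hw' e).
Qed.

End Series.

Lemma tends_interleave k k' : tends_infty k -> tends_infty k' ->
  tends_infty (fun i => if odd i then k' i./2 else k i./2).
Proof.
move=> h h' N; case: (h N) => M hM; case: (h' N) => M' hM'.
exists ((maxn M M').*2) => i hi; case: ifP => _.
  by apply: hM'; apply: leq_trans (leq_maxr M M') _; rewrite geq_half_double.
by apply: hM; apply: leq_trans (leq_maxl M M') _; rewrite geq_half_double.
Qed.

Lemma tends_shift k N : tends_infty k -> tends_infty (fun i => k (i + N)%N).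
Proof. move=> h L; case: (h L) => M hM; exists M => i hi; apply: hM.
by apply: leq_trans hi (leq_addr _ _). Qed.

Lemma tends_addl a k : tends_infty k -> tends_infty (fun i => a + k i)%N.
Proof. move=> h L; case: (h L) => M hM; exists M => i hi.
by apply: leq_trans (hM _ hi) (leq_addl _ _). Qed.

Lemma tends_id : tends_infty id.
Proof. by move=> N; exists N. Qed.

Lemma tends_ev k k' M : tends_infty k -> (forall i, (M <= i)%N -> k' i = k i) -> tends_infty k'.
Proof. move=> h e L; case: (h L) => M' hM; exists (maxn M M') => i.
rewrite geq_max => /andP [h1 h2]; rewrite e //; exact: hM. Qed.

Section Gen.
Variables (B : comAlgType CC) (m : B -> Prop).
Hypothesis Hdb : deformation_base m.
Variables (Q : quiver) (R : (qpath Q -> CC) -> Prop) (psi : (qpath Q -> CC) -> (qpath Q -> B)).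
Hypothesis HR : sub_bimodule_CQge1 R.
Hypothesis Hpsi : bimodule_map_to_mCQ m R psi.

Definition gen (p : qpath Q) (r : qpath Q -> CC) (q : qpath Q) : qpath Q -> B :=
  sandwich p q (idpsi psi r).

Definition term (o : option (qpath Q * (qpath Q -> CC) * qpath Q)) : qpath Q -> B :=
  if o is Some (p, r, q) then sandwich p q (idpsi psi r) else fun _ => 0.

Definition Rok (o : option (qpath Q * (qpath Q -> CC) * qpath Q)) : Prop :=
  if o is Some (p, r, q) then R r else True.

Definition decay (t : nat -> option (qpath Q * (qpath Q -> CC) * qpath Q)) : Prop :=
  forall N, exists M, forall i, (M <= i)%N ->
        match t i with Some (p, r, q) => is_true (N <= plen p + plen q)%N | None => True end.

Lemma Pgen_iff z : in_Pgen m R psi z <->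
  exists t, (forall i, Rok (t i)) /\ decay t /\ sum_to m (fun i => term (t i)) z.
Proof. by []. Qed.

Lemma R0 : R (@fun0 Q). Proof. by case: HR => _ []. Qed.
Lemma RD r s : R r -> R s -> R (fun w => r w + s w). Proof. by case: HR => _ [_ [H _]]; apply: H. Qed.
Lemma RZ c r : R r -> R (fun w => c * r w). Proof. by case: HR => _ [_ [_ [H _]]]; apply: H. Qed.
Lemma Rproj v v' r : R r -> R (eproj v v' r). Proof. by case: HR => _ [_ [_ [_ H]]]; apply: H. Qed.
Lemma R_CQ r : R r -> in_CQ r.
Proof. move=> hr; case: HR => H _; by case: (H r hr). Qed.

Lemma psiD r s : R r -> R s -> psi (fun w => r w + s w) = (fun w => psi r w + psi s w).
Proof. by case: Hpsi => H _; apply: H. Qed.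
Lemma psiZ c r : R r -> psi (fun w => c * r w) = (fun w => c *: psi r w).
Proof. by case: Hpsi => _ [H _]; apply: H. Qed.
Lemma psi_mCQ r : R r -> in_mCQ m (psi r).
Proof. by case: Hpsi => _ [_ [_ H]]; apply: H. Qed.

Lemma psi0 w : psi (@fun0 Q) w = 0.
Proof.
have e : (fun w => @fun0 Q w + @fun0 Q w) = @fun0 Q.
  by apply: functional_extensionality => u; rewrite /fun0 addr0.
have := congr1 (fun f => f w) (psiD R0 R0); rewrite e /= => h.
by apply: (addrI (psi (@fun0 Q) w)); rewrite addr0 -h.
Qed.

Lemma idpsiD r s w : R r -> R s ->
  idpsi psi (fun u => r u + s u) w = idpsi psi r w + idpsi psi s w.
Proof. by move=> hr hs; rewrite /idpsi psiD // scalerDl; ring. Qed.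

Lemma idpsiZ c r w : R r -> idpsi psi (fun u => c * r u) w = c%:A * idpsi psi r w.
Proof. by move=> hr; rewrite /idpsi psiZ // mulrDr !mulr_algl scalerA. Qed.

Lemma genD p q r s w : R r -> R s ->
  gen p (fun u => r u + s u) q w = gen p r q w + gen p s q w.
Proof. move=> hr hs; rewrite /gen -sandwichD; rewrite /sandwich.
by case: (middle p q w) => // c; rewrite idpsiD. Qed.

Lemma genZ c p q r w : R r -> gen p (fun u => c * r u) q w = c%:A * gen p r q w.
Proof. move=> hr; rewrite /gen -sandwichMl /sandwich.
by case: (middle p q w) => // c'; rewrite idpsiZ. Qed.

Lemma gen0 p q w : gen p (@fun0 Q) q w = 0.
Proof. rewrite /gen /sandwich; case: (middle p q w) => // c.
by rewrite /idpsi psi0 /fun0 scale0r addr0. Qed.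

Lemma BCQ_idpsi r : R r -> in_BCQ m (idpsi psi r).
Proof.
move=> hr k; case: (R_CQ hr) => s hs; case: (proj1 (psi_mCQ hr) k) => s' hs'.
exists (s ++ s') => w h; rewrite mem_cat; apply/orP.
case: (eqVneq (r w) 0) => e; last by left; apply: hs.
right; apply: hs' => h'; apply: h; by rewrite /idpsi e scale0r add0r.
Qed.

Lemma BCQ_gen p q r : R r -> in_BCQ m (gen p r q).
Proof. move=> hr; apply: BCQ_sandwich; exact: BCQ_idpsi. Qed.

Lemma res_idpsi r w : R r -> res m (idpsi psi r w) = r w.
Proof.
move=> hr; rewrite /idpsi (resD Hdb) (res_alg Hdb) (res_m Hdb) ?addr0 //.
exact: (proj2 (psi_mCQ hr)).
Qed.

Lemma res_gen p q r w : R r -> res m (gen p r q w) = sandwich p q r w.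
Proof.
move=> hr; rewrite /gen /sandwich; case: (middle p q w) => [c|]; first exact: res_idpsi.
by rewrite (res_m Hdb) //; apply: m0.
Qed.

Lemma gen_m p q r w : R r -> r = @fun0 Q -> m (gen p r q w).
Proof. by move=> hr ->; rewrite gen0; apply: m0. Qed.

Lemma term_len o w : term o w != 0 -> if o is Some (p, r, q) then (plen p + plen q <= plen w)%N else false.
Proof. case: o => [[[p r] q]|] /=; last by rewrite eqxx. exact: sandwich_len. Qed.

Lemma BCQ_term o : Rok o -> in_BCQ m (term o).
Proof. case: o => [[[p r] q]|] /= h; [exact: BCQ_gen | exact: BCQ0]. Qed.

Lemma Pgen_ext z z' : (forall w, z w = z' w) -> in_Pgen m R psi z -> in_Pgen m R psi z'.
Proof. by move=> e; have -> : z = z' by apply: functional_extensionality. Qed.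

Lemma Pgen0 : in_Pgen m R psi (fun _ => 0).
Proof.
exists (fun _ => None); split => //; split; first by move=> N; exists 0%N.
exact: sum_to_zero.
Qed.

Lemma PgenD z z' : in_Pgen m R psi z -> in_Pgen m R psi z' ->
  in_Pgen m R psi (fun w => z w + z' w).
Proof.
move=> /Pgen_iff [t [h1 [h2 h3]]] /Pgen_iff [t' [h1' [h2' h3']]].
apply/Pgen_iff; exists (fun i => if odd i then t' i./2 else t i./2); split.
  by move=> i; case: ifP.
split; last first.
  have := sum_to_interleave h3 h3'; apply: sum_to_ext => i w; by case: ifP.
move=> N; case: (h2 N) => M hM; case: (h2' N) => M' hM'.
exists ((maxn M M').*2) => i hi; case: ifP => _.
  by apply: hM'; apply: leq_trans (leq_maxr M M') _; rewrite geq_half_double.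
by apply: hM; apply: leq_trans (leq_maxl M M') _; rewrite geq_half_double.
Qed.

Definition oscale (c : CC) (o : option (qpath Q * (qpath Q -> CC) * qpath Q)) :=
  if o is Some (p, r, q) then Some (p, (fun w => c * r w), q) else None.

Lemma PgenZ c z : in_Pgen m R psi z -> in_Pgen m R psi (fun w => c%:A * z w).
Proof.
move=> /Pgen_iff [t [h1 [h2 h3]]]; apply/Pgen_iff.
exists (fun i => oscale c (t i)); split.
  by move=> i; move: (h1 i); case: (t i) => [[[p r] q]|] //= h; apply: RZ.
split.
  by move=> N; case: (h2 N) => M hM; exists M => i /hM; case: (t i) => [[[p r] q]|].
have := sum_toMl Hdb (fun _ => c%:A) h3; apply: sum_to_ext => i w.
move: (h1 i); case: (t i) => [[[p r] q]|] //= h; last by rewrite mulr0.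
by have := genZ c p q w h; rewrite /gen => ->.
Qed.

Lemma Pgen_sum (I : Type) (s : seq I) (F : I -> qpath Q -> B) :
  (forall i, in_Pgen m R psi (F i)) -> in_Pgen m R psi (fun w => \sum_(i <- s) F i w).
Proof.
move=> h; elim: s => [|a s IH].
  by apply: Pgen_ext Pgen0 => w; rewrite big_nil.
by apply: Pgen_ext (PgenD (h a) IH) => w; rewrite big_cons.
Qed.

Lemma Pgen_gen p r q : R r -> in_Pgen m R psi (gen p r q).
Proof.
move=> hr; apply/Pgen_iff; exists (fun i => if i == 0%N then Some (p, r, q) else None).
split; first by move=> i; case: ifP.
split; first by move=> N; exists 1%N => i; case: i.
have := @sum_to_fin _ m _ (fun i => term (if i == 0%N then Some (p, r, q) else None)) 1.
move=> h; apply: sum_to_extz (h _) => [w|]; first by rewrite big_ord1.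
by move=> [|i] w.
Qed.

Lemma Pgen_term o : Rok o -> in_Pgen m R psi (term o).
Proof. case: o => [[[p r] q]|] /= h; [exact: Pgen_gen | exact: Pgen0]. Qed.

Lemma IP_of_Pgen z : in_Pgen m R psi z -> in_IP m R psi z.
Proof.
move=> h; exists (fun j => if j == 0%N then 1 else 0), (fun j => if j == 0%N then 0%N else j),
  (fun _ => z); split.
  move=> [|j]; split => //; exact: (mpow0 m j.+1).
split; first by move=> N; exists N.+1 => [[|i]] //= hi; apply: ltnW.
have := @sum_to_fin _ m _ (fun j w => (if j == 0%N then 1 else 0) * z w) 1.
move=> h'; apply: sum_to_extz (h' _) => [w|]; first by rewrite big_ord1 mul1r.
by move=> [|i] w //= _; rewrite mul0r.
Qed.

Lemma IP_of_IPCQ z : in_IP_CQ m R psi z -> in_IP m R psi z.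
Proof.
move=> [b [k [t [h1 [h2 h3]]]]].
exists b, k, (fun i => term (t i)); split.
  move=> i; case: (h1 i) => hb hr; split => //; apply: Pgen_term; exact: hr.
split => //; apply: sum_to_ext h3 => i w; case: (t i) => [[[p r] q]|] /=; last by rewrite mulr0.
by [].
Qed.

Definition PK (K : nat) (y : qpath Q -> B) : Prop :=
  exists (b : nat -> B) (k : nat -> nat) (Y : nat -> qpath Q -> B),
    (forall i, mpow m K (b i) /\ mpow m (k i) (b i) /\ in_IP m R psi (Y i)) /\
    tends_infty k /\ sum_to m (fun i w => b i * Y i w) y.

Lemma PK_ext K y y' : (forall w, y w = y' w) -> PK K y -> PK K y'.
Proof. by move=> e; have -> : y = y' by apply: functional_extensionality. Qed.

Lemma PK0 K : PK K (fun _ => 0).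
Proof.
exists (fun _ => 0), id, (fun _ _ => 0); split.
  move=> i; split; first exact: mpow0. split; first exact: mpow0.
  exact: IP_of_Pgen Pgen0.
split; first exact: tends_id.
apply: (@sum_to_ext _ m Q (fun _ _ => 0)); [by move=> i w; rewrite mulr0 | exact: sum_to_zero].
Qed.

Lemma PKD K y y' : PK K y -> PK K y' -> PK K (fun w => y w + y' w).
Proof.
move=> [b [k [Y [h1 [h2 h3]]]]] [b' [k' [Y' [h1' [h2' h3']]]]].
exists (fun i => if odd i then b' i./2 else b i./2), (fun i => if odd i then k' i./2 else k i./2),
  (fun i => if odd i then Y' i./2 else Y i./2); split.
  by move=> i; case: ifP.
split; first exact: tends_interleave.
have := sum_to_interleave h3 h3'; apply: sum_to_ext => i w; by case: ifP.
Qed.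

Lemma PK_sum K (I : Type) (s : seq I) (F : I -> qpath Q -> B) :
  (forall i, PK K (F i)) -> PK K (fun w => \sum_(i <- s) F i w).
Proof.
move=> h; elim: s => [|a s IH].
  by apply: PK_ext (PK0 K) => w; rewrite big_nil.
by apply: PK_ext (PKD (h a) IH) => w; rewrite big_cons.
Qed.

Lemma PK_scale a K c y : mpow m a c -> PK K y -> PK (a + K) (fun w => c * y w).
Proof.
move=> hc [b [k [Y [h1 [h2 h3]]]]].
exists (fun i => c * b i), (fun i => a + k i)%N, Y; split.
  move=> i; case: (h1 i) => [hb [hk hY]]; split; first exact: mpowM.
  by split => //; apply: mpowM.
split; first exact: tends_addl.
by have := sum_toMl Hdb (fun _ => c) h3; apply: sum_to_ext => i w; rewrite mulrA.
Qed.

Lemma PK_single K b Y : in_IP m R psi Y -> mpow m K b -> PK K (fun w => b * Y w).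
Proof.
move=> hY hb; exists (fun i => if i == 0%N then b else 0), (fun i => if i == 0%N then K else i),
  (fun _ => Y); split.
  move=> [|i]; first by split; [|split].
  by split; [exact: (mpow0 m K) | split; [exact: (mpow0 m i.+1)|]].
split; first by move=> N; exists N.+1 => [[|i]] //= hi; apply: ltnW.
have := @sum_to_fin _ m _ (fun i w => (if i == 0%N then b else 0) * Y w) 1.
move=> h'; apply: sum_to_extz (h' _) => [w|]; first by rewrite big_ord1.
by move=> [|i] w //= _; rewrite mul0r.
Qed.

Lemma PK_le K K' y : (K <= K')%N -> PK K' y -> PK K y.
Proof.
move=> hK [b [k [Y [h1 h]]]]; exists b, k, Y; split => // i.
by case: (h1 i) => [hb h']; split => //; apply: mpow_le hb.
Qed.

Lemma PK_mpow K y : PK K y -> forall w, mpow m K (y w).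
Proof.
move=> [b [k [Y [h1 [h2 h3]]]]]; apply: (sum_to_mpow h3) => i w.
by apply: mpowMr; case: (h1 i).
Qed.

Lemma PK_of_mY z : mY m (in_IP m R psi) z -> PK 1 z.
Proof.
move=> [b [k [Y [h1 [h2 h3]]]]]; exists b, k, Y; split => // i.
case: (h1 i) => [hk [hb hY]]; split; [exact: mpow_le hb | by split].
Qed.

Lemma IP_decomp Y : in_IP m R psi Y ->
  exists W V, in_Pgen m R psi W /\ PK 1 V /\ forall w, Y w = W w + V w.
Proof.
move=> [b [k [y [h1 [h2 h3]]]]].
case: (h2 1%N) => N hN.
pose W := fun w => \sum_(l < N) (res m (b l))%:A * y l w.
have hW : in_Pgen m R psi W.
  rewrite /W; have := @Pgen_sum _ (index_enum 'I_N) (fun (l : 'I_N) w => (res m (b l))%:A * y l w).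
  apply => l; apply: PgenZ; by case: (h1 l).
exists W, (fun w => Y w - W w); split => //; split; last by move=> w; rewrite addrC subrK.
exists (fun l => if (l < N)%N then b l - (res m (b l))%:A else b l),
  (fun l => if (l < N)%N then 1%N else k l), y; split.
  move=> l; case: (h1 l) => hb hy; case: ifP => hl.
    have h : mpow m 1 (b l - (res m (b l))%:A) by apply/(mpow1 Hdb); apply: resP.
    by split; [|split] => //; apply: IP_of_Pgen.
  have hk : (1 <= k l)%N by apply: hN; rewrite leqNgt hl.
  split; [exact: mpow_le hb | split => //; exact: IP_of_Pgen].
split; first by apply: (@tends_ev k _ N h2) => l hl; rewrite ltnNge hl.
have hfin := @sum_to_fin _ m _ (fun l w => if (l < N)%N then (res m (b l))%:A * y l w else 0) N.
have hf := hfin (fun i w hi => ifN _ _ (negbT (leq_gtF hi))) .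
have h4 := sum_toB Hdb h3 hf.
apply: (sum_to_extz _ (sum_to_ext _ h4)).
  move=> w /=; rewrite /W; congr (_ - _); apply: eq_bigr => l _; by rewrite ltn_ord.
by move=> i w /=; case: ifP => _; [rewrite mulrBl | rewrite subr0].
Qed.

End Gen.

Lemma fchoice_lt (T : Type) (x0 : T) n (P : nat -> T -> Prop) :
  (forall i, (i < n)%N -> exists a, P i a) -> exists f : nat -> T, forall i, (i < n)%N -> P i (f i).
Proof.
move=> h; exists (fun i => epsilon (inhabits x0) (P i)) => i hi.
by apply: epsilon_spec; apply: h.
Qed.

Lemma fchoice (T U : Type) (x0 : U) (P : T -> U -> Prop) :
  (forall i, exists a, P i a) -> exists f : T -> U, forall i, P i (f i).
Proof.
move=> h; exists (fun i => epsilon (inhabits x0) (P i)) => i.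
by apply: epsilon_spec; apply: h.
Qed.

Section Basis.
Variables (B : comAlgType CC) (m : B -> Prop).
Hypothesis Hdb : deformation_base m.

Definition comb (e : seq B) (c : nat -> CC) : B := \sum_(s < size e) c s *: e`_s.

Lemma comb_cons x e c : comb (x :: e) c = c 0%N *: x + comb e (fun s => c s.+1).
Proof. by rewrite /comb /= big_ord_recl. Qed.

Lemma combZ e k c : comb e (fun s => k * c s) = k *: comb e c.
Proof. by rewrite /comb scaler_sumr; apply: eq_bigr => i _; rewrite scalerA. Qed.

Lemma comb0 e : comb e (fun _ => 0) = 0.
Proof. by rewrite /comb big1 // => i _; rewrite scale0r. Qed.

Lemma combD e c c' : comb e (fun s => c s + c' s) = comb e c + comb e c'.
Proof. by rewrite /comb -big_split; apply: eq_bigr => i _; rewrite scalerDl. Qed.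

Lemma comb_sum e n (r : nat -> CC) (al : nat -> nat -> CC) :
  comb e (fun s => \sum_(i < n) r i * al i s) = \sum_(i < n) r i *: comb e (al i).
Proof.
rewrite /comb; under eq_bigr do rewrite scaler_suml.
rewrite exchange_big /=; apply: eq_bigr => i _; rewrite scaler_sumr.
by apply: eq_bigr => s _; rewrite scalerA.
Qed.

Definition indep K (e : seq B) : Prop :=
  forall c, mpow m K.+1 (comb e c) -> forall s, (s < size e)%N -> c s = 0.

Lemma reduce K (g : seq B) : (forall i, (i < size g)%N -> mpow m K g`_i) ->
  exists e : seq B, (forall s, (s < size e)%N -> mpow m K e`_s) /\ indep K e /\
    (forall i, (i < size g)%N -> exists a, mpow m K.+1 (g`_i - comb e a)).
Proof.
elim: g => [|x g IH] hg.
  by exists [::]; split => //; split => // c _ s.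
have hg' : forall i, (i < size g)%N -> mpow m K g`_i by move=> i hi; apply: (hg i.+1).
case: (IH hg') => e [he [hind hsp]].
case: (classic (exists a, mpow m K.+1 (x - comb e a))) => hx.
  exists e; split => //; split => // [[|i]] hi //; exact: hsp.
exists (x :: e); split.
  by move=> [|s] hs; [apply: (hg 0%N) | apply: he].
split.
  move=> c hc.
  have c0 : c 0%N = 0.
    apply/eqP; apply/negPn/negP => hc0; apply: hx.
    exists (fun s => - c s.+1 / c 0%N).
    have -> : x - comb e (fun s => - c s.+1 / c 0%N) = (c 0%N)^-1 *: comb (x :: e) c.
      rewrite comb_cons scalerDr scalerA mulVf // scale1r.
      have -> : comb e (fun s => - c s.+1 / c 0%N) = (- (c 0%N)^-1) *: comb e (fun s => c s.+1).
        by rewrite -combZ; congr comb; apply: functional_extensionality => s; rewrite mulNr mulNr mulrC.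
      by rewrite scaleNr opprK.
    exact: mpowZ.
  move=> [|s] hs //; apply: (hind (fun s => c s.+1)) => //.
  by move: hc; rewrite comb_cons c0 scale0r add0r.
move=> [|i] hi.
  exists (fun s => if s is 0%N then 1 else 0); rewrite comb_cons /= comb0 scale1r addr0 subrr.
  exact: (mpow0 m K.+1).
case: (hsp i hi) => a ha; exists (fun s => if s is s'.+1 then a s' else 0).
by rewrite comb_cons /= scale0r add0r.
Qed.

Lemma basis K : exists e : seq B, (forall s, (s < size e)%N -> mpow m K e`_s) /\ indep K e /\
  (forall b, mpow m K b -> exists c, mpow m K.+1 (b - comb e c)).
Proof.
case: Hdb => _ [_ [_ [_ [Hnoeth _]]]].
case: (Hnoeth _ (mpow_is_ideal Hdb K)) => g hg.
have hgK : forall i, (i < size g)%N -> mpow m K g`_i.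
  move=> i hi; apply/hg; exists (fun j => if j == i then 1 else 0).
  rewrite (bigD1 (Ordinal hi)) //= eqxx mul1r big1 ?addr0 // => j hj.
  by rewrite ifN ?mul0r //; move: hj; apply: contra => /eqP h; apply/eqP; apply: val_inj.
case: (reduce hgK) => e [he [hind hsp]].
case: (fchoice_lt (fun _ => 0) hsp) => al hal.
exists e; split => //; split => // b /hg [a ->].
exists (fun s => \sum_(i < size g) res m (a i) * al i s).
rewrite (comb_sum e (size g) (fun i => res m (a i)) al) -sumrB; apply: mpow_sum => i _.
have -> : a i * g`_i - res m (a i) *: comb e (al i) =
  (a i - (res m (a i))%:A) * g`_i + res m (a i) *: (g`_i - comb e (al i)).
  by rewrite mulrBl scalerBr mulr_algl; ring.
apply: mpowD; first by apply: mpow_mS => //; [apply: resP | apply: hgK].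
by apply: mpowZ => //; apply: hal.
Qed.

End Basis.

Section Split.
Variables (B : comAlgType CC) (m : B -> Prop).
Hypothesis Hdb : deformation_base m.
Variables (Q : quiver) (R : (qpath Q -> CC) -> Prop) (psi : (qpath Q -> CC) -> (qpath Q -> B)).
Hypothesis HR : sub_bimodule_CQge1 R.
Hypothesis Hpsi : bimodule_map_to_mCQ m R psi.
Hypothesis Hyp : forall z, in_IP m R psi z -> in_mCQhat m z -> mY m (in_IP m R psi) z.
Variable F : seq (qpath Q -> CC).
Hypothesis HF : is_basis R F.
Variables (L0 H : nat).
Hypothesis HH : forall p q : qpath Q, (plen p <= L0)%N -> sim F p q -> (plen q <= H)%N.

Implicit Types (p q w c u : qpath Q) (r : qpath Q -> CC).

Lemma R_sum n (f : nat -> qpath Q -> CC) : (forall i, (i < n)%N -> R (f i)) ->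
  R (fun w => \sum_(i < n) f i w).
Proof.
elim: n => [|n IH] h.
  have -> : (fun w : qpath Q => \sum_(i < 0) f i w) = @fun0 Q.
    by apply: functional_extensionality => w; rewrite big_ord0.
  exact: (R0 HR).
have -> : (fun w => \sum_(i < n.+1) f i w) = (fun w => \sum_(i < n) f i w + f n w).
  by apply: functional_extensionality => w; rewrite big_ord_recr.
apply: (RD HR); first by apply: IH => i hi; apply: h; apply: ltnW.
exact: h.
Qed.

Lemma R_lincomb a : R (lincomb F a).
Proof.
rewrite /lincomb; apply: (@R_sum (size F) (fun i w => a i * nth (@fun0 Q) F i w)) => i hi.
by apply: (RZ HR); case: HF => h _; apply: h.
Qed.

Definition coef r : nat -> CC := epsilon (inhabits (fun _ => 0)) (fun a => r = lincomb F a).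

Lemma coefP r : R r -> r = lincomb F (coef r).
Proof.
move=> hr; case: HF => _ [_ h]; exact: (epsilon_spec (inhabits (fun _ => 0)) _ (h r hr)).
Qed.

Definition U w : Prop := forall u, sim F w u -> (L0 < plen u)%N.

Definition Utype p q i : Prop :=
  forall c w, nth (@fun0 Q) F i c != 0 -> middle p q w = Some c -> U w.

Definition rU p q r := lincomb F (fun i => if excluded_middle_informative (Utype p q i) then coef r i else 0).
Definition rA p q r := lincomb F (fun i => if excluded_middle_informative (Utype p q i) then 0 else coef r i).

Lemma RrU p q r : R (rU p q r). Proof. exact: R_lincomb. Qed.
Lemma RrA p q r : R (rA p q r). Proof. exact: R_lincomb. Qed.

Lemma r_split p q r : R r -> r = fun w => rU p q r w + rA p q r w.
Proof.
move=> hr; apply: functional_extensionality => w.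
rewrite {1}(coefP hr) /rU /rA /lincomb -big_split; apply: eq_bigr => i _ /=.
by destruct (excluded_middle_informative (Utype p q i)); rewrite /= mul0r ?addr0 ?add0r.
Qed.

Lemma gen_split p q r w : R r -> gen psi p r q w = gen psi p (rU p q r) q w + gen psi p (rA p q r) q w.
Proof.
move=> hr; rewrite -(genD Hpsi p q w (RrU p q r) (RrA p q r)).
by rewrite -(r_split p q hr).
Qed.

Lemma U_len w : U w -> (L0 < plen w)%N.
Proof. by move=> h; apply: h; apply: rst_refl. Qed.

Lemma rA_zero p q r w : (H < plen p + plen q)%N -> rA p q r w = 0.
Proof.
move=> hpq; rewrite /rA /lincomb big1 // => i _.
destruct (excluded_middle_informative (Utype p q i)) as [hU|hU]; first by rewrite mul0r.
exfalso; apply: hU => c w' hc hm u hs; rewrite ltnNge; apply/negP => hu.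
have := HH hu (rst_sym _ _ _ _ hs); rewrite leqNgt => /negP; apply.
apply: leq_trans hpq _; exact: middle_len hm.
Qed.

Lemma sandwich_rU p q r w : sandwich p q (rU p q r) w != 0 -> U w.
Proof.
case/sandwich_nz => c [hm]; rewrite /rU /lincomb => /eqP hne.
have [i hi] : exists i : 'I_(size F), (if excluded_middle_informative (Utype p q i) then coef r i else 0)
    * nth (@fun0 Q) F i c != 0.
  apply: NNPP => hn; apply: hne; apply: big1 => i _.
  by apply/eqP; apply/negPn/negP => h; apply: hn; exists i.
move: hi; destruct (excluded_middle_informative (Utype p q i)) as [hU|hU]; last by rewrite mul0r eqxx.
rewrite mulf_eq0 negb_or => /andP [_ hF]; exact: hU hF hm.
Qed.

Lemma sandwich_rA p q r w : sandwich p q (rA p q r) w != 0 -> ~ U w.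
Proof.
case/sandwich_nz => c [hm]; rewrite /rA /lincomb => /eqP hne.
have [i hi] : exists i : 'I_(size F), (if excluded_middle_informative (Utype p q i) then 0 else coef r i)
    * nth (@fun0 Q) F i c != 0.
  apply: NNPP => hn; apply: hne; apply: big1 => i _.
  by apply/eqP; apply/negPn/negP => h; apply: hn; exists i.
move: hi; destruct (excluded_middle_informative (Utype p q i)) as [hU|hU]; first by rewrite mul0r eqxx.
rewrite mulf_eq0 negb_or => /andP [_ hF].
have [c' [w' [hc' [hm' hU']]]] : exists c' w', nth (@fun0 Q) F i c' != 0 /\ middle p q w' = Some c' /\ ~ U w'.
  apply: NNPP => hn; apply: hU => c' w' h1 h2; apply: NNPP => h3; apply: hn; exists c', w'; done.
have [u [hs hu]] : exists u, sim F w' u /\ ~ (L0 < plen u)%N.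
  apply: NNPP => hn; apply: hU' => u hs; apply: NNPP => h; apply: hn; exists u; done.
move=> hUw; apply: hu; apply: hUw.
apply: rst_trans (hs); apply: rst_step.
exists (nat_of_ord i), p, q, c, c'; do ! split => //.
  exact: middle_concat hm.
exact: middle_concat hm'.
Qed.

Definition oU (o : option (qpath Q * (qpath Q -> CC) * qpath Q)) :=
  if o is Some (p, r, q) then Some (p, rU p q r, q) else None.
Definition oA (o : option (qpath Q * (qpath Q -> CC) * qpath Q)) :=
  if o is Some (p, r, q) then Some (p, rA p q r, q) else None.

Lemma term_split o w : Rok R o -> term psi o w = term psi (oU o) w + term psi (oA o) w.
Proof. case: o => [[[p r] q]|] /= h; last by rewrite addr0. exact: gen_split. Qed.

Lemma res_term o w : Rok R o -> res m (term psi o w) =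
  if o is Some (p, r, q) then sandwich p q r w else 0.
Proof.
case: o => [[[p r] q]|] /= h; first exact: (res_gen Hdb Hpsi).
by apply: (res_m Hdb); apply: m0.
Qed.

Lemma split_Pgen W : in_Pgen m R psi W -> (forall w, res m (W w) != 0 -> (plen w <= L0)%N) ->
  exists WA WU, in_IP_CQ m R psi WA /\ in_BCQ m WA /\ PK m R psi 1 WU /\
    forall w, W w = WA w + WU w.
Proof.
move=> /(Pgen_iff) [t [h1 [h2 h3]]] hres.
case: (h2 H.+1) => M hM.
have hA0 : forall i w, (M <= i)%N -> term psi (oA (t i)) w = 0.
  move=> i w hi; move: (hM i hi); case: (t i) => [[[p r] q]|] //= hpq.
  have -> : rA p q r = @fun0 Q by apply: functional_extensionality => u; apply: rA_zero.
  exact: (gen0 HR Hpsi p q w).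
pose WA := fun w => \sum_(i < M) term psi (oA (t i)) w.
have h3A : sum_to m (fun i => term psi (oA (t i))) WA := @sum_to_fin _ m _ _ M hA0.
pose WU := fun w => W w - WA w.
have h3U : sum_to m (fun i => term psi (oU (t i))) WU.
  have := sum_toB Hdb h3 h3A; apply: sum_to_ext => i w.
  by rewrite (term_split w (h1 i)) addrK.
have RU : forall i, Rok R (oU (t i)) by move=> i; case: (t i) => [[[p r] q]|] //=; apply: RrU.
have RA : forall i, Rok R (oA (t i)) by move=> i; case: (t i) => [[[p r] q]|] //=; apply: RrA.
have hPU : in_Pgen m R psi WU.
  apply/Pgen_iff; exists (fun i => oU (t i)); split => //; split => //.
  by move=> N; case: (h2 N) => M' hM'; exists M' => i /hM'; case: (t i) => [[[p r] q]|].
have hresU : forall w, res m (WU w) = 0.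
  move=> w; case: (classic (U w)) => hU.
    rewrite /WU (resB Hdb) /WA (res_sum Hdb).
    have -> : res m (W w) = 0.
      apply/eqP; apply/negPn/negP => /hres; rewrite leqNgt; move/negP; apply.
      exact: U_len.
    rewrite big1 ?subr0 // => i _; rewrite res_term //.
    move: (t i) => o; case: o => [[[p r] q]|] //=.
    by apply/eqP; apply/negPn/negP => /sandwich_rA.
  case: (conv_res Hdb (h3U w)) => N hN; rewrite -(hN N (leqnn _)) (res_sum Hdb).
  apply: big1 => i _; rewrite res_term //.
  move: (t i) => o; case: o => [[[p r] q]|] //=.
  by apply/eqP; apply/negPn/negP => /sandwich_rU.
have hmU : in_mCQhat m WU by move=> w; apply: (m_res Hdb).
have hPKU : PK m R psi 1 WU.
  apply: PK_of_mY; apply: Hyp => //; exact: IP_of_Pgen.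
exists WA, WU; split; last split; last split => //; last by move=> w; rewrite /WU addrC subrK.
  exists (fun i => if (i < M)%N then 1 else 0), (fun i => if (i < M)%N then 0%N else i),
    (fun i => if (i < M)%N then oA (t i) else None); split.
    move=> i; case: ifP => hi; first by split => //; apply: RA.
    by split => //; apply: (mpow0 m i).
  split; first by apply: (@tends_ev id _ M tends_id) => i hi; rewrite ltnNge hi.
  apply: (sum_to_ext _ h3A) => i w /=; case: ifP => hi.
    by move: (oA (t i)) => o; case: o => [[[p r] q]|] /=; rewrite ?mul1r.
  by rewrite hA0 // leqNgt hi.
rewrite /WA; apply: BCQ_sum => i; exact: (BCQ_term HR Hpsi (RA i)).
Qed.

End Split.

Section Key.
Variables (B : comAlgType CC) (m : B -> Prop).
Hypothesis Hdb : deformation_base m.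
Variables (Q : quiver) (R : (qpath Q -> CC) -> Prop) (psi : (qpath Q -> CC) -> (qpath Q -> B)).
Hypothesis HR : sub_bimodule_CQge1 R.
Hypothesis Hpsi : bimodule_map_to_mCQ m R psi.
Hypothesis Hyp : forall z, in_IP m R psi z -> in_mCQhat m z -> mY m (in_IP m R psi) z.
Variable F : seq (qpath Q -> CC).
Hypothesis HF : is_basis R F.
Hypothesis Hbd : forall N, exists H, forall p q : qpath Q, (plen p <= N)%N -> sim F p q -> (plen q <= H)%N.

Definition item := (B * (qpath Q -> B))%type.
Definition item0 : item := (0, fun _ => 0).
Definition itemsP (P : item -> Prop) (l : seq item) : Prop :=
  forall i, (i < size l)%N -> P (nth item0 l i).
Definition lsum (l : seq item) (w : qpath Q) : B := \sum_(it <- l) it.1 * it.2 w.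

Lemma PK_init z : in_IP_CQ m R psi z -> in_mCQ m z -> PK m R psi 1 z.
Proof.
move=> hz [_ hzm].
case: (IP_decomp Hdb HR Hpsi (IP_of_IPCQ hz)) => W [V [hW [hV e]]].
have hWm : in_mCQhat m W.
  move=> w; apply: (m_res Hdb).
  have -> : W w = z w - V w by rewrite e addrK.
  rewrite (resB Hdb) !(res_m Hdb) ?subr0 //.
  by apply/(mpow1 Hdb); apply: (PK_mpow Hdb hV).
have hPW := PK_of_mY (Hyp (IP_of_Pgen hW) hWm).
apply: PK_ext (PKD hPW hV) => w; by rewrite e.
Qed.

Lemma key K y : PK m R psi K y -> in_BCQ m y ->
  exists (l : seq item) y',
    itemsP (fun it => mpow m K it.1 /\ in_IP_CQ m R psi it.2 /\ in_BCQ m it.2) l /\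
    PK m R psi K.+1 y' /\ forall w, y w = lsum l w + y' w.
Proof.
move=> [b [k [Y [h1 [h2 h3]]]]] hy.
case: (h2 K.+1) => N hN.
have hbN : forall j, (N <= j)%N -> mpow m K.+1 (b j).
  by move=> j hj; apply: (mpow_le (hN j hj)); case: (h1 j) => _ [].
have [WV hWV] : exists WV : nat -> (qpath Q -> B) * (qpath Q -> B), forall j,
    in_Pgen m R psi (WV j).1 /\ PK m R psi 1 (WV j).2 /\ forall w, Y j w = (WV j).1 w + (WV j).2 w.
  apply: (@fchoice nat _ ((fun _ => 0, fun _ => 0) : (qpath Q -> B) * (qpath Q -> B))
    (fun j WV => in_Pgen m R psi WV.1 /\ PK m R psi 1 WV.2 /\ forall w, Y j w = WV.1 w + WV.2 w)) => j.
  case: (h1 j) => _ [_ hY]; case: (IP_decomp Hdb HR Hpsi hY) => W [V [h4 [h5 h6]]].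
  by exists (W, V).
pose W j := (WV j).1. pose V j := (WV j).2.
case: (basis Hdb K) => e [he [hind hsp]].
have [cc hcc] : exists cc : nat -> nat -> CC, forall j, mpow m K.+1 (b j - comb e (cc j)).
  apply: (@fchoice nat _ ((fun _ => 0) : nat -> CC) (fun j c => mpow m K.+1 (b j - comb e c))) => j; apply: hsp; by case: (h1 j).
pose d := size e.
pose Ws s := fun w => \sum_(j < N) (cc j s)%:A * W j w.
have hWs : forall s, in_Pgen m R psi (Ws s).
  move=> s; rewrite /Ws; apply: (@Pgen_sum _ _ _ _ _ _ (index_enum 'I_N) (fun (j : 'I_N) w => (cc j s)%:A * W j w)) => j.
  apply: (PgenZ Hdb HR Hpsi); by case: (hWV j).
pose tail := fun w => y w - \sum_(j < N) b j * Y j w.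
have htail : PK m R psi K.+1 tail.
  exists (fun i => b (i + N)%N), (fun i => k (i + N)%N), (fun i => Y (i + N)%N); split.
    move=> i; case: (h1 (i + N)%N) => hb [hk hY]; split; first by apply: hbN; rewrite leq_addl.
    by split.
  split; first exact: tends_shift.
  exact: (sum_to_shift Hdb N h3).
pose Rest := fun w => tail w + (\sum_(j < N) b j * V j w + \sum_(j < N) (b j - comb e (cc j)) * W j w).
have hRest : PK m R psi K.+1 Rest.
  apply: PKD => //; apply: PKD.
    apply: (@PK_sum _ _ _ _ _ _ _ (index_enum 'I_N) (fun (j : 'I_N) w => b j * V j w)) => j.
    rewrite -addn1; apply: (PK_scale Hdb); first by case: (h1 j).
    by case: (hWV j) => _ [].
  apply: (@PK_sum _ _ _ _ _ _ _ (index_enum 'I_N) (fun (j : 'I_N) w => (b j - comb e (cc j)) * W j w)) => j.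
  apply: PK_single => //; apply: IP_of_Pgen; by case: (hWV j).
have hy_eq : forall w, y w = \sum_(s < d) e`_s * Ws s w + Rest w.
  move=> w; rewrite /Rest /tail.
  have -> : \sum_(j < N) b j * Y j w =
    \sum_(j < N) b j * V j w + \sum_(j < N) (b j - comb e (cc j)) * W j w
    + \sum_(s < d) e`_s * Ws s w.
    have -> : \sum_(s < d) e`_s * Ws s w = \sum_(j < N) comb e (cc j) * W j w.
      rewrite /Ws; under eq_bigr do rewrite mulr_sumr.
      rewrite exchange_big /=; apply: eq_bigr => j _.
      rewrite /comb mulr_suml; apply: eq_bigr => s _.
      by rewrite mulrCA mulrA mulr_algl.
    rewrite -!big_split /=; apply: eq_bigr => j _.
    case: (hWV j) => _ [_ ->]; rewrite -/(W j) -/(V j); ring.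
  ring.
case: (hy K.+1) => S hS.
pose L0 := (\max_(u <- S) plen u)%N.
have hres : forall s w, (s < d)%N -> res m (Ws s w) != 0 -> (plen w <= L0)%N.
  move=> s w hs hr; apply: leq_bigmax_seq => //; apply: hS => hyw; move: hr; apply/negP/negPn/eqP.
  have h4 : mpow m K.+1 (comb e (fun s => res m (Ws s w))).
    have h5 : mpow m K.+1 (y w - comb e (fun s => res m (Ws s w))).
      rewrite hy_eq.
      have -> : \sum_(s < d) e`_s * Ws s w + Rest w - comb e (fun s => res m (Ws s w)) =
         \sum_(s < d) (Ws s w - (res m (Ws s w))%:A) * e`_s + Rest w.
        rewrite /comb; have -> : \sum_(s < d) (Ws s w - (res m (Ws s w))%:A) * e`_s =
          \sum_(s < d) e`_s * Ws s w - \sum_(i < size e) res m (Ws i w) *: e`_i.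
          rewrite -sumrB; apply: eq_bigr => i _.
          by rewrite mulrBl mulr_algl [Ws i w * _]mulrC.
        ring.
      apply: mpowD; last by apply: (PK_mpow Hdb hRest).
      apply: mpow_sum => i _; apply: mpow_mS; first exact: resP.
      by apply: he.
    by have := mpowB Hdb hyw h5; rewrite opprB addrC subrK.
  exact: hind h4 s hs.
case: (Hbd L0) => H hH.
have [AU hAU] : exists AU : nat -> (qpath Q -> B) * (qpath Q -> B), forall s, (s < d)%N ->
    in_IP_CQ m R psi (AU s).1 /\ in_BCQ m (AU s).1 /\ PK m R psi 1 (AU s).2 /\
    forall w, Ws s w = (AU s).1 w + (AU s).2 w.
  apply: (@fchoice_lt _ ((fun _ => 0, fun _ => 0) : (qpath Q -> B) * (qpath Q -> B)) d
    (fun s AU => in_IP_CQ m R psi AU.1 /\ in_BCQ m AU.1 /\ PK m R psi 1 AU.2 /\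
    forall w, Ws s w = AU.1 w + AU.2 w)) => s hs.
  case: (split_Pgen Hdb HR Hpsi Hyp HF hH (hWs s) (fun w => hres s w hs)) => WA [WU [h4 [h5 [h6 h7]]]].
  by exists (WA, WU).
pose l : seq item := [seq (e`_s, (AU s).1) | s <- iota 0 d].
have hl : forall w, lsum l w = \sum_(s < d) e`_s * (AU s).1 w.
  move=> w; rewrite /lsum /l big_map.
  have -> : iota 0 d = index_iota 0 d by rewrite /index_iota subn0.
  by rewrite big_mkord.
exists l, (fun w => y w - lsum l w); split.
  move=> i; rewrite size_map size_iota => hi.
  rewrite (nth_map 0%N) ?size_iota // nth_iota // add0n /=.
  case: (hAU i hi) => h4 [h5 _]; split => //; exact: he.
split; last by move=> w; rewrite addrC subrK.
have hU : PK m R psi K.+1 (fun w => \sum_(s < d) e`_s * (AU s).2 w).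
  apply: (@PK_sum _ _ _ _ _ _ _ (index_enum 'I_d) (fun (s : 'I_d) w => e`_s * (AU s).2 w)) => s.
  rewrite -addn1; apply: (PK_scale Hdb); first exact: he.
  by case: (hAU s (ltn_ord s)) => _ [_ []].
apply: PK_ext (PKD hU hRest) => w.
rewrite hl hy_eq.
have -> : \sum_(s < d) e`_s * Ws s w = \sum_(s < d) e`_s * (AU s).1 w + \sum_(s < d) e`_s * (AU s).2 w.
  rewrite -big_split; apply: eq_bigr => s _ /=.
  by case: (hAU s (ltn_ord s)) => _ [_ [_ ->]]; rewrite mulrDr.
ring.
Qed.

End Key.

Section Stream.
Variables (B : comAlgType CC) (m : B -> Prop).
Hypothesis Hdb : deformation_base m.
Variables (Q : quiver) (R : (qpath Q -> CC) -> Prop) (psi : (qpath Q -> CC) -> (qpath Q -> B)).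
Hypothesis HR : sub_bimodule_CQge1 R.
Hypothesis Hpsi : bimodule_map_to_mCQ m R psi.
Hypothesis Hyp : forall z, in_IP m R psi z -> in_mCQhat m z -> mY m (in_IP m R psi) z.
Variable F : seq (qpath Q -> CC).
Hypothesis HF : is_basis R F.
Hypothesis Hbd : forall N, exists H, forall p q : qpath Q, (plen p <= N)%N -> sim F p q -> (plen q <= H)%N.
Variable z : qpath Q -> B.
Hypothesis hz : in_IP_CQ m R psi z.
Hypothesis hzm : in_mCQ m z.
Implicit Types (w : qpath Q) (l : seq (item B Q)) (it : item B Q).

Definition state := (nat * seq (item B Q) * (qpath Q -> B))%type.

Definition keyprop (K : nat) (y : qpath Q -> B) (p : seq (item B Q) * (qpath Q -> B)) : Prop :=
  itemsP (fun it => mpow m K it.1 /\ in_IP_CQ m R psi it.2 /\ in_BCQ m it.2) p.1 /\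
  PK m R psi K.+1 p.2 /\ forall w, y w = lsum p.1 w + p.2 w.

Definition step (st : state) : state :=
  match st with
  | (K, it :: rest, y) => (K, rest, y)
  | (K, [::], y) =>
      let p := epsilon (inhabits ([::], fun _ => 0)) (keyprop K y) in (K.+1, p.1, p.2)
  end.

Definition emit (st : state) : item B Q :=
  if st.1.2 is it :: _ then it else item0 B Q.

Definition states (n : nat) : state := iter n step (1%N, [::], z).
Definition Kof n := (states n).1.1.
Definition pend n := (states n).1.2.
Definition rem n := (states n).2.

Definition itP (K : nat) (it : item B Q) : Prop :=
  mpow m (K - 1) it.1 /\ mpow m 1 it.1 /\ in_IP_CQ m R psi it.2 /\ in_BCQ m it.2.

Definition psum n w := \sum_(i < n) (emit (states i)).1 * (emit (states i)).2 w.

Definition Inv n : Prop :=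
  (1 <= Kof n)%N /\ PK m R psi (Kof n) (rem n) /\ itemsP (itP (Kof n)) (pend n) /\
  (forall i, (i < n)%N -> in_BCQ m (emit (states i)).2) /\
  (forall w, z w = psum n w + lsum (pend n) w + rem n w).

Lemma statesS n : states n.+1 = step (states n).
Proof. by []. Qed.

Lemma IPCQ0 : in_IP_CQ m R psi (fun _ => 0).
Proof.
exists (fun _ => 0), id, (fun _ => None); split.
  by move=> i; split => //; apply: (mpow0 m i).
split; first exact: tends_id.
move=> w k; exists 0%N => n _; rewrite big1 ?subrr //; exact: (mpow0 m k).
Qed.

Lemma lsum_nil w : lsum ([::] : seq (item B Q)) w = 0.
Proof. by rewrite /lsum big_nil. Qed.

Lemma lsum_cons it l w : lsum (it :: l) w = it.1 * it.2 w + lsum l w.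
Proof. by rewrite /lsum big_cons. Qed.

Lemma lsum_mpow k l w : itemsP (fun it => mpow m k it.1) l -> mpow m k (lsum l w).
Proof.
elim: l => [|it l IH] h; first by rewrite lsum_nil; apply: mpow0.
rewrite lsum_cons; apply: mpowD; first by apply: (mpowMr Hdb); apply: (h 0%N).
by apply: IH => i hi; apply: (h i.+1).
Qed.

Lemma Inv0 : Inv 0.
Proof.
split => //; split; first exact: (PK_init Hdb HR Hpsi Hyp hz hzm).
split => //; split => // w.
by rewrite /psum big_ord0 /pend /rem /= lsum_nil !add0r.
Qed.

Lemma InvS n : Inv n -> Inv n.+1.
Proof.
rewrite /Inv /Kof /pend /rem statesS.
case E: (states n) => [[K pd] y] /= [hK [hPK [hit [hem heq]]]].
case: pd E hit heq => [|it rest] E hit heq /=.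
  have hyB : in_BCQ m y.
    have e : forall w, y w = z w - psum n w.
      by move=> w; rewrite heq lsum_nil addr0 addrC addKr.
    apply: BCQ_ext (fun w => esym (e w)) _.
    apply: BCQD; first by case: hzm.
    apply: (BCQN Hdb); rewrite /psum.
    apply: (BCQ_ext (x := fun w => \sum_(i <- index_enum 'I_n) (emit (states i)).1 * (emit (states i)).2 w)) => //.
    apply: BCQ_sum => i; apply: (BCQMl Hdb); exact: hem.
  have hex : exists p, keyprop K y p.
    case: (key Hdb HR Hpsi Hyp HF Hbd hPK hyB) => l [y' [h1 [h2 h3]]].
    by exists (l, y').
  have := epsilon_spec (inhabits ([::], fun _ => 0)) (keyprop K y) hex.
  set p := epsilon _ _ => [[h1 [h2 h3]]].
  split => //; split => //; split.
    move=> i hi; case: (h1 i hi) => [hb [hc hd]]; rewrite /itP subn1 /=; split => //.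
    split; first exact: (mpow_le hK hb). by split.
  split.
    move=> i; rewrite ltnS leq_eqVlt => /orP [/eqP ->|hi]; last exact: hem.
    by rewrite E /=; apply: BCQ0.
  move=> w; rewrite /psum big_ord_recr /= -/(psum n w) E /= mul0r addr0 heq lsum_nil addr0.
  by rewrite h3 addrA.
split => //; split => //; split.
  by move=> i hi; apply: (hit i.+1).
split.
  move=> i; rewrite ltnS leq_eqVlt => /orP [/eqP ->|hi]; last exact: hem.
  by rewrite E /=; case: (hit 0%N) => // _ [_ []].
move=> w; rewrite /psum big_ord_recr /= -/(psum n w) E /= heq lsum_cons.
ring.
Qed.

Lemma Inv_all n : Inv n.
Proof. elim: n => [|n IH]; [exact: Inv0 | exact: InvS]. Qed.

Lemma Kof_mono n : (Kof n <= Kof n.+1)%N.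
Proof.
rewrite /Kof statesS; case: (states n) => [[K [|it rest]] y] //=.
Qed.

Lemma Kof_mono' n d : (Kof n <= Kof (n + d))%N.
Proof.
elim: d => [|d IH]; first by rewrite addn0.
apply: leq_trans IH _; rewrite addnS; exact: Kof_mono.
Qed.

Lemma Kof_grow len n : size (pend n) = len -> (Kof n < Kof (n + len.+1))%N.
Proof.
elim: len n => [|len IH] n.
  rewrite /pend /Kof addn1 statesS; case: (states n) => [[K [|it rest]] y] //=.
move=> hs; have h1 : Kof n.+1 = Kof n.
  by move: hs; rewrite /pend /Kof statesS; case: (states n) => [[K [|it rest]] y].
have h2 : size (pend n.+1) = len.
  by move: hs; rewrite /pend statesS; case: (states n) => [[K [|it rest]] y] //= [].
by have := IH _ h2; rewrite h1 addSnnS.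
Qed.

Lemma Kof_tends : forall T, exists M, forall n, (M <= n)%N -> (T <= Kof n)%N.
Proof.
elim => [|T [M hM]]; first by exists 0%N.
exists (M + (size (pend M)).+1)%N => n hn.
have := Kof_grow (erefl (size (pend M))).
move=> h.
have h3 : (Kof (M + (size (pend M)).+1) <= Kof n)%N.
  by have := Kof_mono' (M + (size (pend M)).+1) (n - (M + (size (pend M)).+1)); rewrite subnKC.
exact: (leq_trans (leq_ltn_trans (hM M (leqnn M)) h) h3).
Qed.

Lemma final : mY m (in_IP_CQ m R psi) z.
Proof.
exists (fun i => (emit (states i)).1), (fun i => maxn 1 (Kof i - 1)), (fun i => (emit (states i)).2).
split.
  move=> i; split; first exact: leq_maxl.
  case: (Inv_all i) => [hK [hPK [hit _]]].
  rewrite /emit; move: hit; rewrite /pend /Kof; case: (states i) => [[K [|it rest]] y] /= hit.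
    by split; [apply: mpow0 | exact: IPCQ0].
  case: (hit 0%N) => // [h1 [h2 [h3 _]]]; split => //.
  by rewrite /maxn; case: ifP.
split.
  move=> T; case: (Kof_tends T.+1) => M hM; exists M => n hn.
  by apply: leq_trans (leq_maxr _ _); rewrite leq_subRL ?add1n; [apply: hM | apply: leq_trans (hM _ hn)].
move=> w k; case: (Kof_tends k.+1) => M hM; exists M => n hn.
case: (Inv_all n) => [hK [hPK [hit [_ heq]]]].
have -> : z w - \sum_(i < n) (emit (states i)).1 * (emit (states i)).2 w = lsum (pend n) w + rem n w.
  by rewrite heq /psum; ring.
have hk : (k <= Kof n - 1)%N by rewrite leq_subRL ?add1n; [apply: hM | apply: leq_trans (hM _ hn)].
apply: (mpow_le hk); apply: mpowD.
  by apply: lsum_mpow => i hi; case: (hit i hi).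
by apply: (mpow_le (leq_subr 1 _)); apply: (PK_mpow Hdb hPK).
Qed.

End Stream.

Theorem proposition6p48
  (Q : quiver) (R : (qpath Q -> CC) -> Prop)
  (B : comAlgType CC) (m : B -> Prop)
  (psi : (qpath Q -> CC) -> (qpath Q -> B)) :
  sub_bimodule_CQge1 R ->
  finite_dimensional R ->
  bounded_type R ->
  deformation_base m ->
  bimodule_map_to_mCQ m R psi ->
  (forall z, in_IP m R psi z -> in_mCQhat m z -> mY m (in_IP m R psi) z) ->
  forall z, in_IP_CQ m R psi z -> in_mCQ m z -> mY m (in_IP_CQ m R psi) z.
Proof.
move=> HR _ [F [HF [_ Hbd]]] Hdb Hpsi Hyp z hz hzm.
exact: (final Hdb HR Hpsi Hyp HF Hbd hz hzm).
Qed.
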